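(* Let $p, q, r$ be positive integers with $p \le q$ and $r \ge 2$, and let $\lambda\in\Lambda^{p,q,r}_{+}$. Then: (1) If $p=q=1$: $\mathcal{F}(\lambda;\Lambda^{1,1,r}) \simeq \mathcal{F}(T^{1,1,r}_{1,1,2}(\lambda);\Lambda^{1,1,2})$ if $\lambda\in\operatorname{Fix}(T^{1,1,2}_{1,1,r}\circ T^{1,1,r}_{1,1,2})$, and $\mathcal{F}(\lambda;\Lambda^{1,1,r})\simeq\mathrm{pt}$ otherwise. (2) If $p=1$ and $q\ge 2$: $\mathcal{F}(\lambda;\Lambda^{1,q,r}) \simeq \mathcal{F}(T^{1,q,r}_{1,2,2}(\lambda);\Lambda^{1,2,2})$ if $\lambda\in\operatorname{Fix}(T^{1,2,2}_{1,q,r}\circ T^{1,q,r}_{1,2,2})$, and $\mathcal{F}(\lambda;\Lambda^{1,q,r})\simeq\mathrm{pt}$ otherwise. (3) If $2\le p\le q$: $\mathcal{F}(\lambda;\Lambda^{p,q,r}) \simeq \mathcal{F}(T^{p,q,r}_{2,2,2}(\lambda);\Lambda^{2,2,2})$ if $\lambda\in\operatorname{Fix}(T^{2,2,2}_{p,q,r}\circ T^{p,q,r}_{2,2,2})$, and $\mathcal{F}(\lambda;\Lambda^{p,q,r})\simeq\mathrm{pt}$ otherwise. Here $\simeq$ is homotopy equivalence and $\mathrm{pt}$ the one-point space.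
   Context: $\mathbb{N}=\{0,1,2,\dots\}$. For an additive commutative monoid $\Lambda$ that is cancellative and has no non-trivial invertible elements, define the partial order $\lambda \le \mu$ iff there is $\nu\in\Lambda$ with $\lambda+\nu=\mu$; $\lambda<\mu$ means $\lambda\le\mu$, $\lambda\ne\mu$. Let $\Lambda_+=\Lambda\setminus\{0\}$. For a poset $P$, $|P|$ is the geometric realization of its order complex and $(x,y)_P=\{z\in P:x<z<y\}$. The Frobenius complex is $\mathcal{F}(\lambda;\Lambda)=|(0,\lambda)_\Lambda|$ for $\lambda\in\Lambda_+$. For positive integers $p,q,r$, $\Lambda^{p,q,r}=\langle a,b,c\mid pa+qb=rc\rangle$ is the quotient of the free commutative monoid $\mathbb{N}a\oplus\mathbb{N}b\oplus\mathbb{N}c$ by the congruence generated by $\lambda+pa+qb\sim\lambda+rc$. For positive integers $p,q$, $\tau^p_q:\mathbb{N}\to\mathbb{N}$ is $\tau^p_q(mp+n)=mq+\min\{n,q-1\}$ ($m\in\mathbb{N}$, $0\le n<p$). For positive integers $p,q,r,s,t,u$, the transition map $T^{p,q,r}_{s,t,u}:\Lambda^{p,q,r}\to\Lambda^{s,t,u}$ is $T^{p,q,r}_{s,t,u}(ma+nb+kc)=\tau^p_s(m)a+\tau^q_t(n)b+\tau^r_u(k)c$. For a function $f$ on a set $X$, $\operatorname{Fix} f=\{x\in X:f(x)=x\}$. *)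

(* Defs.v *)
From HB Require Import structures.
From Stdlib Require Import Relation_Operators.
From mathcomp Require Import all_boot all_order all_algebra.
From mathcomp Require Import all_classical all_reals all_analysis.
From mathcomp Require Import Rstruct Rstruct_topology.
Set Implicit Arguments. Unset Strict Implicit. Unset Printing Implicit Defensive.
Import Order.TTheory GRing.Theory Num.Theory.
Local Open Scope classical_set_scope.
Local Open Scope ring_scope.

Notation RR := Rdefinitions.R.

(* elements of the free commutative monoid N a + N b + N c *)
Definition triple := (nat * nat * nat)%type.
Definition tadd (x y : triple) : triple :=
  (x.1.1 + y.1.1, x.1.2 + y.1.2, x.2 + y.2)%N.
Definition t0 : triple := (0, 0, 0)%N.

Definition gstep (p q r : nat) (x y : triple) : Prop :=
  exists l : triple, x = tadd l (p, q, 0%N) /\ y = tadd l (0%N, 0%N, r).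

(* the congruence generated by the relation (it is the equivalence closure,
   which is automatically compatible with addition since gstep is) *)
Definition tcong (p q r : nat) : triple -> triple -> Prop :=
  clos_refl_sym_trans triple (gstep p q r).

(* elements of Lambda^{p,q,r} are congruence classes *)
Definition cls (p q r : nat) (x : triple) : set triple := [set y | tcong p q r x y].
Definition isElt (p q r : nat) (S : set triple) : Prop := exists x, S = cls p q r x.
Definition zeroL (p q r : nat) : set triple := cls p q r t0.

(* lambda <= mu iff exists nu, lambda + nu = mu (addition of classes = class of sums) *)
Definition leL (p q r : nat) (S T : set triple) : Prop :=
  exists x y v : triple,
    [/\ S = cls p q r x, T = cls p q r y & tcong p q r (tadd x v) y].
Definition ltL (p q r : nat) (S T : set triple) : Prop := leL p q r S T /\ S <> T.

Definition posL (p q r : nat) (S : set triple) : Prop := isElt p q r S /\ S <> zeroL p q r.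

Definition intervalL (p q r : nat) (lam : set triple) : set (set triple) :=
  [set S | [/\ isElt p q r S, ltL p q r (zeroL p q r) S & ltL p q r S lam]].

(* |P| : points are finitely supported nonnegative weight functions on P with
   total weight 1 whose support is a chain; topology = subspace of the product
   topology on E -> R (for finite P this is the usual topology). *)
Definition realization (E : choiceType) (lt : E -> E -> Prop) (P : set E)
  : set {ptws E -> RR} :=
  [set f : {ptws E -> RR} |
    [/\ (forall x, 0 <= f x),
        (forall x, f x != 0 -> P x),
        finite_set [set x | f x != 0],
        (\sum_(x \in [set x | f x != 0]) f x)%R = 1 &
        (forall x y, f x != 0 -> f y != 0 -> [\/ x = y, lt x y | lt y x])]].

Definition Frob (p q r : nat) (lam : set triple) : set {ptws set triple -> RR} :=
  realization (ltL p q r) (intervalL p q r lam).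

Definition homotopic_in {T U : topologicalType} (A : set T) (B : set U)
  (f g : T -> U) : Prop :=
  exists H : RR * T -> U,
    [/\ {within [set tx : RR * T | (0 <= tx.1 <= 1)%R /\ A tx.2], continuous H},
        (forall t x, (0 <= t <= 1)%R -> A x -> B (H (t, x))),
        (forall x, A x -> H (0%R, x) = f x) &
        (forall x, A x -> H (1%R, x) = g x)].

Definition htpy_equiv {T U : topologicalType} (A : set T) (B : set U) : Prop :=
  exists (f : T -> U) (g : U -> T),
    [/\ {within A, continuous f}, (forall x, A x -> B (f x)),
        {within B, continuous g} & (forall y, B y -> A (g y))] /\
    homotopic_in A A (g \o f) id /\ homotopic_in B B (f \o g) id.

Definition pt : set RR := [set 0%R].

(* tau^p_q (m p + n) = m q + min(n, q-1) *)
Definition tau (p q m : nat) : nat := ((m %/ p) * q + minn (m %% p) q.-1)%N.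

Definition Trep (p q r s t u : nat) (x : triple) : triple :=
  (tau p s x.1.1, tau q t x.1.2, tau r u x.2).

Definition Tmap (p q r s t u : nat) (S : set triple) : set triple :=
  [set z | exists x, S x /\ tcong s t u (Trep p q r s t u x) z].

(* Main.v *)
Require Import Defs.
From HB Require Import structures.
From Stdlib Require Import Relation_Operators.
From mathcomp Require Import all_boot all_order all_algebra.
From mathcomp Require Import all_classical all_reals all_analysis.
From mathcomp Require Import Rstruct Rstruct_topology.
From mathcomp Require Import lra zify.
Set Implicit Arguments. Unset Strict Implicit. Unset Printing Implicit Defensive.
Import Order.TTheory GRing.Theory Num.Theory.

Section Helpers.
Local Open Scope classical_set_scope.
Local Open Scope ring_scope.
Lemma ptws_cont (X : topologicalType) (E : Type) (F : X -> {ptws E -> RR}) :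
  (forall y, continuous (fun x => F x y)) -> continuous F.
Proof.
move=> h x; apply/cvg_sup => i.
have := @continuous_comp_initial _ X _ (fun f : E -> RR => f i) F (h i).
by apply.
Qed.

Lemma ptws_proj (E : choiceType) (y : E) : continuous (fun f : {ptws E -> RR} => f y).
Proof. exact: (@proj_continuous E (fun _ => RR) y). Qed.

Lemma fst_cont (X Y : topologicalType) : continuous (@fst X Y).
Proof. by move=> [x y]; exact: cvg_fst. Qed.
Lemma snd_cont (X Y : topologicalType) : continuous (@snd X Y).
Proof. by move=> [x y]; exact: cvg_snd. Qed.

Lemma sum_cont (X : topologicalType) (E : Type) (s : seq E) (a b : E -> X -> RR) :
  (forall x, continuous (a x)) -> (forall x, continuous (b x)) ->
  continuous (fun z => \sum_(x <- s) a x z * b x z).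
Proof.
move=> ha hb; elim: s => [|x s IH].
  under eq_fun do rewrite big_nil. exact: cst_continuous.
under eq_fun do rewrite big_cons.
move=> z; apply: (@continuousD _ RR^o X (fun z => a x z * b x z)); last exact: IH.
exact: cvgM (ha x z) (hb x z).
Qed.

Lemma cD (X : topologicalType) (f g : X -> RR) :
  continuous f -> continuous g -> continuous (fun x => f x + g x).
Proof. by move=> hf hg x; apply: (@continuousD _ RR^o X f g x (hf x) (hg x)). Qed.
Lemma cB (X : topologicalType) (f g : X -> RR) :
  continuous f -> continuous g -> continuous (fun x => f x - g x).
Proof. by move=> hf hg x; apply: (@continuousB _ RR^o X f g x (hf x) (hg x)). Qed.
Lemma cM (X : topologicalType) (f g : X -> RR) :
  continuous f -> continuous g -> continuous (fun x => f x * g x).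
Proof. by move=> hf hg x; exact: cvgM (hf x) (hg x). Qed.
Lemma cC (X : topologicalType) (k : RR) : continuous (fun _ : X => k).
Proof. exact: cst_continuous. Qed.
Lemma cNorm (X : topologicalType) (f : X -> RR) :
  continuous f -> continuous (fun x => `|f x|).
Proof.
move=> hf x; apply: (@continuous_comp _ _ _ f (Num.norm : RR^o -> RR)); first exact: hf.
exact: (@norm_continuous _ RR^o).
Qed.

Definition clamp (z : RR) : RR := (`|z| - `|z - 1| + 1) / 2.
Lemma clamp_cont : continuous clamp.
Proof.
apply: cM; last exact: cC.
apply: cD; last exact: cC.
apply: cB; apply: cNorm; first by move=> ?; exact: cvg_id.
by apply: cB; [move=> ?; exact: cvg_id | exact: cC].
Qed.
Definition kmap (E E' : Type) (s : seq E) (K : E -> E' -> RR) (w : E -> RR)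
  : {ptws E' -> RR} := fun y => \sum_(x <- s) w x * K x y.

Definition cmp (E : Type) (lt : E -> E -> Prop) (x y : E) := [\/ x = y, lt x y | lt y x].

Lemma real_sum (E : choiceType) (r : seq E) (v : E -> RR) : uniq r ->
  (forall x, v x != 0 -> x \in r) ->
  \sum_(x \in [set x | v x != 0]) v x = \sum_(x <- r) v x.
Proof.
move=> ur hr; apply: fsbig_fwiden => //.
- by move=> x [_ /negP]; rewrite negbK => /eqP.
Qed.

Lemma real_intro (E : choiceType) (lt : E -> E -> Prop) (P : set E) (s : seq E)
  (v : {ptws E -> RR}) : uniq s -> (forall x, P x -> x \in s) ->
  (forall x, 0 <= v x) -> (forall x, v x != 0 -> P x) ->
  \sum_(x <- s) v x = 1 ->
  (forall x y, v x != 0 -> v y != 0 -> cmp lt x y) ->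
  realization lt P v.
Proof.
move=> us hs h0 hP h1 hc; split => //.
- apply: (@sub_finite_set _ _ [set` s]); last exact: finite_seq.
  by move=> x /= /hP /hs.
- by rewrite (real_sum us) // => x /hP /hs.
Qed.

Lemma real_elim_sum (E : choiceType) (lt : E -> E -> Prop) (P : set E) (s : seq E)
  (v : {ptws E -> RR}) : uniq s -> (forall x, P x -> x \in s) ->
  realization lt P v -> \sum_(x <- s) v x = 1.
Proof.
move=> us hs [_ hP _ h1 _]; by rewrite -(real_sum us) // => x /hP /hs.
Qed.

Lemma big_nz (E : eqType) (s : seq E) (F : E -> RR) :
  \sum_(x <- s) F x != 0 -> exists2 x, x \in s & F x != 0.
Proof.
move=> h; apply: contrapT => hn; move/negP: h; apply; apply/eqP.
rewrite big1_seq // => x /= xs; apply: contrapT => hx; apply: hn; exists x => //; exact/eqP.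
Qed.

Lemma kmap_real (E E' : choiceType) (ltE : E -> E -> Prop) (ltE' : E' -> E' -> Prop)
  (P : set E) (P' : set E') (s : seq E) (s' : seq E') (K : E -> E' -> RR)
  (w : {ptws E -> RR}) :
  uniq s -> (forall x, x \in s -> P x) -> (forall x, P x -> x \in s) ->
  uniq s' -> (forall y, P' y -> y \in s') ->
  (forall x y, P x -> 0 <= K x y) -> (forall x y, P x -> K x y != 0 -> P' y) ->
  (forall x, P x -> \sum_(y <- s') K x y = 1) ->
  (forall x x' y y', P x -> P x' -> cmp ltE x x' -> K x y != 0 -> K x' y' != 0 ->
     cmp ltE' y y') ->
  realization ltE P w -> realization ltE' P' (kmap s K w).
Proof.
move=> us sP Ps us' Ps' K0 KP K1 Kc hw.
have w1 := real_elim_sum us Ps hw.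
case: hw => w0 wP _ _ wc.
have supp y : kmap s K w y != 0 -> exists x, [/\ P x, w x != 0 & K x y != 0].
  move/big_nz => [x xs]; rewrite mulf_eq0 negb_or => /andP[h1 h2].
  by exists x; split => //; exact: sP.
apply: (real_intro (s := s')) => //.
- move=> y; rewrite /kmap; apply: sumr_ge0 => x _.
  have [wx0|wxn] := eqVneq (w x) 0; first by rewrite wx0 mul0r.
  by apply: mulr_ge0 => //; apply: K0; apply: wP.
- by move=> y /supp [x [Px _ Kxy]]; exact: KP Kxy.
- rewrite /kmap exchange_big /=.
  rewrite -w1 big_seq [RHS]big_seq; apply: eq_bigr => x xs.
  by rewrite -mulr_sumr K1 ?mulr1 //; exact: sP.
- move=> y y' /supp [x [Px wx Kx]] /supp [x' [Px' wx' Kx']].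
  exact: Kc Px Px' (wc _ _ wx wx') Kx Kx'.
Qed.

Definition ind (E : eqType) (a b : E) : RR := if a == b then 1 else 0.

Lemma sum_ind (E : eqType) (s : seq E) (a : E) (F : E -> RR) : uniq s ->
  \sum_(y <- s) ind a y * F y = if a \in s then F a else 0.
Proof.
elim: s => [|y s IH] /=; first by rewrite big_nil.
move=> /andP[ys us]; rewrite big_cons IH // in_cons /ind.
have [->|ne] := eqVneq a y; first by rewrite (negPf ys) mul1r addr0.
by rewrite mul0r add0r.
Qed.

Lemma sum_ind1 (E : eqType) (s : seq E) (a : E) : uniq s ->
  \sum_(y <- s) ind a y = if a \in s then 1 else 0.
Proof.
move=> us; rewrite -(@sum_ind E s a (fun _ => 1) us); apply: eq_bigr => y _; by rewrite mulr1.
Qed.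

Lemma kmap_cont (E : choiceType) (E' : Type) (s : seq E) (K : RR -> E -> E' -> RR) :
  (forall x y, continuous (fun t => K t x y)) ->
  continuous (fun tw : RR * {ptws E -> RR} => kmap s (K tw.1) tw.2).
Proof.
move=> hK; apply: ptws_cont => y; rewrite /kmap; apply: sum_cont => x z.
- apply: (@continuous_comp _ _ _ snd (fun w : {ptws E -> RR} => w x)).
    exact: snd_cont.
  exact: ptws_proj.
- apply: (@continuous_comp _ _ _ fst (fun t => K t x y)).
    exact: fst_cont.
  exact: hK.
Qed.

Lemma kmap_cont0 (E : choiceType) (E' : Type) (s : seq E) (K : E -> E' -> RR) :
  continuous (fun w : {ptws E -> RR} => kmap s K w).
Proof.
apply: ptws_cont => y; rewrite /kmap; apply: sum_cont => x.
- exact: ptws_proj.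
- exact: cst_continuous.
Qed.

Lemma kmap_id (E : choiceType) (s : seq E) (w : {ptws E -> RR}) : uniq s ->
  (forall x, w x != 0 -> x \in s) -> kmap s (@ind E) w = w.
Proof.
move=> us hs; apply: funext => y; rewrite /kmap.
transitivity (\sum_(x <- s) ind y x * w x).
  by apply: eq_bigr => x _; rewrite mulrC /ind eq_sym.
rewrite sum_ind //; case: ifP => // /negbT ys.
apply/esym; apply: contrapT => /eqP h; move: ys; rewrite hs //.
Qed.

Lemma kmap_comp (E E' E'' : Type) (s : seq E) (s' : seq E') (K1 : E -> E' -> RR)
  (K2 : E' -> E'' -> RR) (w : E -> RR) :
  kmap s' K2 (kmap s K1 w) = kmap s (fun x z => \sum_(y <- s') K1 x y * K2 y z) w.
Proof.
apply: funext => z; rewrite /kmap.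
under eq_bigr do rewrite mulr_suml.
rewrite exchange_big /=; apply: eq_bigr => x _; rewrite mulr_sumr.
by apply: eq_bigr => y _; rewrite mulrA.
Qed.

Lemma kmap_ext (E E' : eqType) (s : seq E) (K K' : E -> E' -> RR) (w : E -> RR) :
  (forall x y, x \in s -> K x y = K' x y) -> kmap s K w = kmap s K' w.
Proof.
move=> h; apply: funext => z; rewrite /kmap big_seq [RHS]big_seq.
by apply: eq_bigr => x xs; rewrite h.
Qed.

Definition lee (E : Type) (lt : E -> E -> Prop) (x y : E) := x = y \/ lt x y.

Lemma lee_cmp (E : Type) (lt : E -> E -> Prop) x y : lee lt x y -> cmp lt x y.
Proof. by case=> h; [apply: Or31 | apply: Or32]. Qed.

Lemma cmp_sym (E : Type) (lt : E -> E -> Prop) x y : cmp lt x y -> cmp lt y x.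
Proof. by case=> h; [apply: Or31 | apply: Or33 | apply: Or32]. Qed.

Lemma cmp_refl (E : Type) (lt : E -> E -> Prop) x : cmp lt x x.
Proof. exact: Or31. Qed.

Definition Ksch (E : eqType) (a : RR -> RR) (sg : E -> RR -> RR) (c : E) (e : E -> E)
  (t : RR) (x y : E) : RR :=
  a t * ind c y + (1 - a t) * (sg x t * ind x y + (1 - sg x t) * ind (e x) y).

Lemma mul_ind0 (E : eqType) (k : RR) (u v : E) : ~ (k != 0 /\ v = u) -> k * ind u v = 0.
Proof.
move=> h; have [->|kn] := eqVneq k 0; first by rewrite mul0r.
rewrite /ind; case: eqP => [e|_]; last by rewrite mulr0.
by exfalso; apply: h; split.
Qed.

Lemma Ksch_nz (E : eqType) a sg (c : E) e t x y : Ksch a sg c e t x y != 0 ->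
  [\/ a t != 0 /\ y = c, sg x t != 0 /\ y = x | sg x t != 1 /\ y = e x].
Proof.
move=> h; apply: contrapT => hn; move/eqP: h; apply.
rewrite /Ksch (@mul_ind0 _ (a t)); last by move=> hh; apply: hn; apply: Or31.
rewrite (@mul_ind0 _ (sg x t)); last by move=> hh; apply: hn; apply: Or32.
rewrite (@mul_ind0 _ (1 - sg x t)); first by rewrite !addr0 add0r mulr0.
move=> [h1 h2]; apply: hn; apply: Or33; split => //.
by apply: contra h1 => /eqP ->; rewrite subrr.
Qed.

Lemma Ksch_sum (E : eqType) (s : seq E) a sg (c : E) e t x : uniq s ->
  \sum_(y <- s) Ksch a sg c e t x y =
  a t * (if c \in s then 1 else 0) + (1 - a t) * (sg x t * (if x \in s then 1 else 0)
     + (1 - sg x t) * (if e x \in s then 1 else 0)).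
Proof.
move=> us; rewrite /Ksch big_split /= -mulr_sumr -mulr_sumr big_split /=.
by rewrite -!mulr_sumr !sum_ind1.
Qed.

Lemma sched_real (E : choiceType) (lt : E -> E -> Prop) (P : set E) (s : seq E)
  (a : RR -> RR) (sg : E -> RR -> RR) (c : E) (e : E -> E) (t : RR) (w : {ptws E -> RR}) :
  uniq s -> (forall x, x \in s -> P x) -> (forall x, P x -> x \in s) ->
  0 <= a t <= 1 -> (forall x, 0 <= sg x t <= 1) ->
  (a t != 0 -> P c) -> (forall x, P x -> P (e x)) ->
  (forall x, P x -> lee lt (e x) x) ->
  (a t != 0 -> forall x, P x -> sg x t = 0 /\ lee lt (e x) c) ->
  (forall x x', P x -> P x' -> cmp lt x x' -> sg x t != 0 -> sg x' t != 1 -> lee lt x' x) ->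
  (forall x x', P x -> P x' -> cmp lt x x' -> cmp lt (e x) (e x')) ->
  (forall x y z, P x -> P y -> P z -> lee lt x y -> lee lt y z -> lee lt x z) ->
  realization lt P w -> realization lt P (kmap s (Ksch a sg c e t) w).
Proof.
move=> us sP Ps /andP[a0 a1] hsg hc heP hex hac hsch hecmp htr.
apply: (@kmap_real E E lt lt P P s s) => //.
- move=> x y Px; rewrite /Ksch; have /andP[s0 s1] := hsg x.
  apply: addr_ge0; first by apply: mulr_ge0 => //; rewrite /ind; case: eqP.
  apply: mulr_ge0; first by rewrite subr_ge0.
  by apply: addr_ge0; apply: mulr_ge0; rewrite ?subr_ge0 //; rewrite /ind; case: eqP.
- move=> x y Px /Ksch_nz [[an ee]|[_ ee]|[_ ee]]; rewrite ee //; [exact: hc | exact: heP].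
- move=> x Px; rewrite Ksch_sum // (Ps x Px) (Ps _ (heP _ Px)).
  have [->|an] := eqVneq (a t) 0; first by rewrite mul0r add0r subr0 mul1r !mulr1 addrC subrK.
  by rewrite (Ps _ (hc an)) !mulr1 [sg x t + _]addrC subrK mulr1 addrC subrK.
- move=> x x' y y' Px Px' cxx' /Ksch_nz hy /Ksch_nz hy'.
  have Pex := heP _ Px; have Pex' := heP _ Px'.
  case: hy => [[an ->]|[sn ->]|[sn ->]]; case: hy' => [[an' ->]|[sn' ->]|[sn' ->]].
  + exact: cmp_refl.
  + by case: (hac an _ Px') => h0 _; move: sn'; rewrite h0 eqxx.
  + by apply: cmp_sym; apply: lee_cmp; case: (hac an _ Px').
  + by case: (hac an' _ Px) => h0 _; move: sn; rewrite h0 eqxx.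
  + exact: cxx'.
  + apply: cmp_sym; apply: lee_cmp; apply: (htr _ x') => //; first exact: hex.
    exact: hsch.
  + by apply: lee_cmp; case: (hac an' _ Px).
  + apply: lee_cmp; apply: (htr _ x) => //; first exact: hex.
    by apply: hsch => //; apply: cmp_sym.
  + exact: hecmp.
Qed.


Lemma clampE z : clamp z = if z <= 0 then 0 else if 1 <= z then 1 else z.
Proof.
rewrite /clamp; case: (lerP z 0) => h0.
  have h2 : z - 1 <= 0 by lra.
  have e1 := ler0_norm h0; have e2 := ler0_norm h2; lra.
have e1 := gtr0_norm h0; case: (lerP 1 z) => h1.
  have h2 : 0 <= z - 1 by lra.
  have e2 := ger0_norm h2; lra.
have h2 : z - 1 < 0 by lra.
have e2 := ltr0_norm h2; lra.
Qed.

Ltac clt := rewrite clampE; repeat (case: ifPn; rewrite -?ltNge => ?); lra.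

Lemma clamp_ge0 z : 0 <= clamp z.
Proof. clt. Qed.
Lemma clamp_le1 z : clamp z <= 1.
Proof. clt. Qed.
Lemma clamp0 z : z <= 0 -> clamp z = 0.
Proof. move=> h; clt. Qed.
Lemma clamp1 z : 1 <= z -> clamp z = 1.
Proof. move=> h; clt. Qed.
Lemma clamp_nz z : clamp z != 0 -> 0 < z.
Proof.
move=> h; rewrite ltNge; apply/negP => hz; move: h; by rewrite clamp0 // eqxx.
Qed.
Lemma clamp_n1 z : clamp z != 1 -> z < 1.
Proof.
move=> h; rewrite ltNge; apply/negP => hz; move: h; by rewrite clamp1 // eqxx.
Qed.

Lemma clamp_order (al : RR) (m n : nat) :
  clamp (al + m%:R) != 0 -> clamp (al + n%:R) != 1 -> (n <= m)%N.
Proof.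
move=> /clamp_nz h1 /clamp_n1 h2.
have : (n%:R : RR) < m.+1%:R by rewrite -natr1; lra.
by rewrite ltr_nat ltnS.
Qed.

Lemma affine_cont (k b : RR) : continuous (fun t : RR => k * t + b).
Proof. apply: cD; last exact: cC. apply: cM; [exact: cC | move=> ?; exact: cvg_id]. Qed.

Lemma Ksch_cont (E : eqType) a sg (c : E) e x y :
  continuous a -> continuous (sg x) -> continuous (fun t => Ksch a sg c e t x y).
Proof.
move=> ha hs; rewrite /Ksch.
apply: cD; first by apply: cM; [exact: ha | exact: cC].
apply: cM; first by apply: cB; [exact: cC | exact: ha].
apply: cD; first by apply: cM; [exact: hs | exact: cC].
apply: cM; last exact: cC.
by apply: cB; [exact: cC | exact: hs].
Qed.

Lemma sched_homotopic (E : choiceType) (lt : E -> E -> Prop) (P : set E) (s : seq E)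
  (a : RR -> RR) (sg : E -> RR -> RR) (c : E) (e : E -> E)
  (f0 f1 : {ptws E -> RR} -> {ptws E -> RR}) :
  continuous a -> (forall x, continuous (sg x)) ->
  (forall t w, (0 <= t <= 1) -> realization lt P w ->
     realization lt P (kmap s (Ksch a sg c e t) w)) ->
  (forall w, realization lt P w -> kmap s (Ksch a sg c e 0) w = f0 w) ->
  (forall w, realization lt P w -> kmap s (Ksch a sg c e 1) w = f1 w) ->
  homotopic_in (realization lt P) (realization lt P) f0 f1.
Proof.
move=> ha hs hR h0 h1.
exists (fun tw : RR * {ptws E -> RR} => kmap s (Ksch a sg c e tw.1) tw.2); split.
- apply: continuous_subspaceT; apply: kmap_cont => x y; exact: Ksch_cont.
- move=> t x ht Ax; exact: hR.
- exact: h0.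
- exact: h1.
Qed.

Lemma lee_refl (E : Type) (lt : E -> E -> Prop) x : lee lt x x.
Proof. by left. Qed.

Lemma sched_hsch (E : Type) (lt : E -> E -> Prop) (P : set E) (h : E -> nat) (al : RR)
  x x' : (forall x x', P x -> P x' -> lt x x' -> (h x < h x')%N) -> P x -> P x' ->
  cmp lt x x' -> clamp (al + (h x)%:R) != 0 -> clamp (al + (h x')%:R) != 1 -> lee lt x' x.
Proof.
move=> hh Px Px' cx h1 h2; have hle := clamp_order h1 h2.
case: cx => [->|l|l]; [exact: lee_refl | | by right].
by have := hh _ _ Px Px' l; rewrite ltnNge hle.
Qed.

Lemma ind_real (E : choiceType) (lt : E -> E -> Prop) (P : set E) (s : seq E) (c : E) :
  uniq s -> (forall x, P x -> x \in s) -> P c ->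
  realization lt P ((fun y => ind c y) : {ptws E -> RR}).
Proof.
move=> us Ps Pc; apply: (real_intro (s := s)) => //.
- by move=> x; rewrite /ind; case: eqP.
- by move=> x; rewrite /ind; have [<-|_] := eqVneq c x; rewrite ?eqxx.
- by rewrite sum_ind1 // (Ps _ Pc).
- move=> x y; rewrite /ind; have [<-|_] := eqVneq c x; have [<-|_] := eqVneq c y;
  rewrite ?eqxx // => _ _; exact: cmp_refl.
Qed.

Lemma real_supp (E : choiceType) (lt : E -> E -> Prop) (P : set E) (s : seq E) w :
  (forall x, P x -> x \in s) -> realization lt P w -> forall x, w x != 0 -> x \in s.
Proof. by move=> Ps [_ hP _ _ _] x /hP /Ps. Qed.

Lemma kmap_sumconst (E : eqType) (E' : Type) (s : seq E) (g : E' -> RR) (w : E -> RR) :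
  \sum_(x <- s) w x = 1 -> kmap s (fun _ y => g y) w = g.
Proof.
move=> h1; apply: funext => y; rewrite /kmap -mulr_suml h1 mul1r //.
Qed.

Theorem abs_contract (E : choiceType) (lt : E -> E -> Prop) (P : set E) (s : seq E)
  (e : E -> E) (c : E) (h : E -> nat) (N : nat) :
  uniq s -> (forall x, x \in s -> P x) -> (forall x, P x -> x \in s) ->
  P c -> (forall x, P x -> P (e x)) -> (forall x, P x -> lee lt (e x) x) ->
  (forall x, P x -> lee lt (e x) c) ->
  (forall x x', P x -> P x' -> cmp lt x x' -> cmp lt (e x) (e x')) ->
  (forall x, P x -> (h x < N)%N) ->
  (forall x x', P x -> P x' -> lt x x' -> (h x < h x')%N) ->
  (forall x y z, P x -> P y -> P z -> lee lt x y -> lee lt y z -> lee lt x z) ->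
  htpy_equiv (realization lt P) pt.
Proof.
move=> us sP Ps Pc heP hex hec hecmp hN hh htr.
pose dc : {ptws E -> RR} := fun y => ind c y.
have Adc : realization lt P dc by exact: ind_real us Ps Pc.
exists (fun _ => 0), (fun _ => dc); split; [split|split].
- apply: continuous_subspaceT; exact: cst_continuous.
- by [].
- apply: continuous_subspaceT; exact: cst_continuous.
- by [].
- pose a t : RR := clamp ((-2) * t + 1).
  pose al t : RR := (2 * N%:R) * t + (1 - 2 * N%:R).
  pose sg x t : RR := clamp (al t + (h x)%:R).
  have hw1 w : realization lt P w -> \sum_(x <- s) w x = 1.
    exact: real_elim_sum.
  apply: (@sched_homotopic E lt P s a sg c e).
  + move=> t; apply: continuous_comp; [exact: affine_cont | exact: clamp_cont].
  + move=> x t; apply: continuous_comp; last exact: clamp_cont.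
    by apply: cD; [exact: affine_cont | exact: cC].
  + move=> t w /andP[t0 t1] Aw; apply: sched_real => //.
    * by rewrite clamp_ge0 clamp_le1.
    * by move=> x; rewrite clamp_ge0 clamp_le1.
    * move=> /clamp_nz an x Px; split; last exact: hec.
      apply: clamp0; rewrite /al.
      have hx : ((h x).+1%:R : RR) <= N%:R by rewrite ler_nat; exact: hN.
      rewrite -natr1 in hx.
      have hN0 : (0 : RR) <= N%:R by [].
      nra.
    * move=> x x' Px Px' cx h1 h2; exact: (sched_hsch hh Px Px' cx h1 h2).
  + move=> w Aw; rewrite -[RHS](kmap_sumconst (s := s) (fun y => ind c y) (hw1 w Aw)).
    apply: kmap_ext => x y _; rewrite /Ksch /a.
    have -> : clamp ((-2) * 0 + 1) = 1 by apply: clamp1; lra.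
    by rewrite subrr mul0r addr0 mul1r.
  + move=> w Aw; rewrite /= -[RHS](kmap_id us (real_supp Ps Aw)).
    apply: kmap_ext => x y xs; rewrite /Ksch /a /sg /al.
    have -> : clamp ((-2) * 1 + 1) = 0 by apply: clamp0; lra.
    have -> : clamp (2 * N%:R * 1 + (1 - 2 * N%:R) + (h x)%:R) = 1.
      apply: clamp1; have : (0 : RR) <= (h x)%:R by []. lra.
    by rewrite mul0r add0r subr0 mul1r subrr mul0r addr0 mul1r.
- exists (fun tw : RR * RR => tw.2); split.
  + apply: continuous_subspaceT; exact: snd_cont.
  + by [].
  + by move=> x ->.
  + by [].
Qed.

Lemma push_real (E E' : choiceType) (lt : E -> E -> Prop) (lt' : E' -> E' -> Prop)
  (P : set E) (P' : set E') (s : seq E) (s' : seq E') (F : E -> E') w :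
  uniq s -> (forall x, x \in s -> P x) -> (forall x, P x -> x \in s) ->
  uniq s' -> (forall y, P' y -> y \in s') ->
  (forall x, P x -> P' (F x)) ->
  (forall x x', P x -> P x' -> cmp lt x x' -> cmp lt' (F x) (F x')) ->
  realization lt P w -> realization lt' P' (kmap s (fun x y => ind (F x) y) w).
Proof.
move=> us sP Ps us' Ps' hF hc; apply: (@kmap_real E E' lt lt' P P' s s') => //.
- by move=> x y _; rewrite /ind; case: eqP.
- move=> x y Px; rewrite /ind; have [<-|_] := eqVneq (F x) y; rewrite ?eqxx //.
  by move=> _; exact: hF.
- by move=> x Px; rewrite sum_ind1 // (Ps' _ (hF _ Px)).
- move=> x x' y y' Px Px' cx; rewrite /ind.
  have [<-|_] := eqVneq (F x) y; have [<-|_] := eqVneq (F x') y'; rewrite ?eqxx // => _ _.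
  exact: hc.
Qed.

Theorem abs_equiv (E E' : choiceType) (lt : E -> E -> Prop) (lt' : E' -> E' -> Prop)
  (P : set E) (P' : set E') (s : seq E) (s' : seq E') (F : E -> E') (G : E' -> E)
  (c0 : E) (h : E -> nat) (N : nat) :
  uniq s -> (forall x, x \in s -> P x) -> (forall x, P x -> x \in s) ->
  uniq s' -> (forall y, y \in s' -> P' y) -> (forall y, P' y -> y \in s') ->
  (forall x, P x -> P' (F x)) -> (forall y, P' y -> P (G y)) ->
  (forall x x', P x -> P x' -> cmp lt x x' -> cmp lt' (F x) (F x')) ->
  (forall y y', P' y -> P' y' -> cmp lt' y y' -> cmp lt (G y) (G y')) ->
  (forall y, P' y -> F (G y) = y) -> (forall x, P x -> lee lt (G (F x)) x) ->
  (forall x, P x -> (h x < N)%N) ->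
  (forall x x', P x -> P x' -> lt x x' -> (h x < h x')%N) ->
  (forall x y z, P x -> P y -> P z -> lee lt x y -> lee lt y z -> lee lt x z) ->
  htpy_equiv (realization lt P) (realization lt' P').
Proof.
move=> us sP Ps us' sP' Ps' hF hG hFc hGc hFG hGF hN hh htr.
pose f := fun w : {ptws E -> RR} => kmap s (fun x y => ind (F x) y) w.
pose g := fun w : {ptws E' -> RR} => kmap s' (fun y x => ind (G y) x) w.
exists f, g; split; [split|split].
- apply: continuous_subspaceT; exact: kmap_cont0.
- move=> w Aw; exact: (@push_real E E' lt lt' P P' s s' F w us sP Ps us' Ps' hF hFc Aw).
- apply: continuous_subspaceT; exact: kmap_cont0.
- move=> w Aw; exact: (@push_real E' E lt' lt P' P s' s G w us' sP' Ps' us Ps hG hGc Aw).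
- pose a (t : RR) : RR := 0.
  pose al t : RR := N%:R * t + (1 - N%:R).
  pose sg x t : RR := clamp (al t + (h x)%:R).
  apply: (@sched_homotopic E lt P s a sg c0 (fun x => G (F x))).
  + exact: cst_continuous.
  + move=> x t; apply: continuous_comp; last exact: clamp_cont.
    by apply: cD; [exact: affine_cont | exact: cC].
  + move=> t w /andP[t0 t1] Aw; apply: sched_real => //.
    * by rewrite /a; apply/andP; split; [exact: lexx | exact: ler01].
    * by move=> x; rewrite clamp_ge0 clamp_le1.
    * by rewrite /a eqxx.
    * by move=> x Px; apply: hG; apply: hF.
    * by rewrite /a eqxx.
    * move=> x x' Px Px' cx h1 h2; exact: (sched_hsch hh Px Px' cx h1 h2).
    * move=> x x' Px Px' cx; apply: hGc; [exact: hF | exact: hF | exact: hFc].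
  + move=> w Aw; rewrite /= /f /g kmap_comp.
    apply: kmap_ext => x z xs; rewrite sum_ind // (Ps' _ (hF _ (sP _ xs))).
    rewrite /Ksch /a /sg /al.
    have -> : clamp (N%:R * 0 + (1 - N%:R) + (h x)%:R) = 0.
      apply: clamp0.
      have hx : ((h x).+1%:R : RR) <= N%:R by rewrite ler_nat; apply: hN; exact: sP.
      rewrite -natr1 in hx; lra.
    by rewrite !mul0r !add0r !subr0 !mul1r.
  + move=> w Aw; rewrite /= -[RHS](kmap_id us (real_supp Ps Aw)).
    apply: kmap_ext => x y xs; rewrite /Ksch /a /sg /al.
    have -> : clamp (N%:R * 1 + (1 - N%:R) + (h x)%:R) = 1.
      apply: clamp1; have : (0 : RR) <= (h x)%:R by []. lra.
    by rewrite mul0r add0r subr0 mul1r subrr mul0r addr0 mul1r.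
- exists (fun tw : RR * {ptws E' -> RR} => tw.2); split.
  + apply: continuous_subspaceT; exact: snd_cont.
  + by [].
  + move=> w Aw; rewrite /= /f /g kmap_comp -[LHS](kmap_id us' (real_supp Ps' Aw)).
    apply: kmap_ext => y z ys; rewrite sum_ind // (Ps _ (hG _ (sP' _ ys))).
    by rewrite hFG //; exact: sP'.
  + by [].
Qed.


Definition le3 (x y : triple) : Prop :=
  (x.1.1 <= y.1.1)%N /\ (x.1.2 <= y.1.2)%N /\ (x.2 <= y.2)%N.

Definition om (p q r : nat) (x : triple) : nat :=
  (r * x.1.1 + r * x.1.2 + (p + q) * x.2)%N.

Lemma om_tadd p q r x y : om p q r (tadd x y) = (om p q r x + om p q r y)%N.
Proof. case: x => [[a b] c]; case: y => [[a' b'] c']; rewrite /om /tadd /=; lia. Qed.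

Lemma om_tcong p q r x y : tcong p q r x y -> om p q r x = om p q r y.
Proof.
elim => {x y} [x y [l [-> ->]]|x|x y _ ->|x y z _ -> _ ->] //.
rewrite !om_tadd /om /=; lia.
Qed.

Lemma om_mono p q r x y : le3 x y -> (om p q r x <= om p q r y)%N.
Proof.
case: x => [[a b] c]; case: y => [[a' b'] c']; rewrite /le3 /om /= => [[h1 [h2 h3]]].
apply: leq_add; [apply: leq_add|]; exact: leq_mul.
Qed.

Lemma om_eq p q r x y : (0 < r)%N -> (0 < p)%N -> le3 x y ->
  om p q r x = om p q r y -> x = y.
Proof.
case: x => [[a b] c]; case: y => [[a' b'] c']; rewrite /le3 /om /= => hr hp [h1 [h2 h3]] e.
have e1 : a = a' by nia.
have e2 : b = b' by nia.
have e3 : c = c' by nia.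
by rewrite e1 e2 e3.
Qed.

Lemma le3_om p q r x y : (0 < r)%N -> (0 < p)%N -> le3 x y -> x <> y ->
  (om p q r x < om p q r y)%N.
Proof.
move=> hr hp h ne; rewrite ltn_neqAle om_mono // andbT.
by apply/eqP => e; apply: ne; exact: om_eq e.
Qed.

Lemma tadd_perm (x y z : triple) : tadd (tadd x y) z = tadd (tadd x z) y.
Proof. case: x => [[a b] c]; case: y => [[a' b'] c']; case: z => [[a'' b''] c'']; rewrite /tadd /=; congr (_, _, _); lia. Qed.

Lemma tcong_add p q r x y v : tcong p q r x y -> tcong p q r (tadd x v) (tadd y v).
Proof.
elim => {x y} [x y [l [-> ->]]|x|x y _ h|x y z _ h1 _ h2].
- apply: rst_step; exists (tadd l v); split; exact: tadd_perm.
- exact: rst_refl.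
- exact: rst_sym.
- exact: rst_trans h2.
Qed.

Lemma tcong_refl p q r x : tcong p q r x x.
Proof. exact: rst_refl. Qed.
Lemma tcong_sym p q r x y : tcong p q r x y -> tcong p q r y x.
Proof. exact: rst_sym. Qed.
Lemma tcong_trans p q r x y z : tcong p q r x y -> tcong p q r y z -> tcong p q r x z.
Proof. exact: rst_trans. Qed.

Lemma cls_self p q r x : cls p q r x x.
Proof. exact: tcong_refl. Qed.

Lemma cls_eq p q r x y : tcong p q r x y -> cls p q r x = cls p q r y.
Proof.
move=> h; apply: funext => z; apply: propext; rewrite /cls /=; split => hz.
- exact: tcong_trans (tcong_sym h) hz.
- exact: tcong_trans h hz.
Qed.

Lemma cls_inv p q r x y : cls p q r x = cls p q r y -> tcong p q r x y.
Proof. move=> e; have := cls_self p q r y; rewrite -e; by []. Qed.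

Lemma cls_mem p q r S x y : S = cls p q r x -> S y -> S = cls p q r y.
Proof. by move=> -> h; apply: cls_eq. Qed.

Definition tsub (y x : triple) : triple := (y.1.1 - x.1.1, y.1.2 - x.1.2, y.2 - x.2)%N.

Lemma tadd_sub x y : le3 x y -> tadd x (tsub y x) = y.
Proof.
case: x => [[a b] c]; case: y => [[a' b'] c']; rewrite /le3 /tadd /tsub /= => [[h1 [h2 h3]]].
congr (_, _, _); lia.
Qed.

Lemma le3_add x v : le3 x (tadd x v).
Proof. case: x => [[a b] c]; case: v => [[a' b'] c']; rewrite /le3 /tadd /=; lia. Qed.

Lemma leL_intro p q r x y : le3 x y -> leL p q r (cls p q r x) (cls p q r y).
Proof.
move=> h; exists x, y, (tsub y x); split => //; rewrite tadd_sub //; exact: tcong_refl.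
Qed.

Lemma leL_elim p q r S T : leL p q r S T ->
  exists x y, [/\ S = cls p q r x, T = cls p q r y & le3 x y].
Proof.
move=> [x [y [v [-> -> h]]]]; exists x, (tadd x v); split => //.
- by apply: cls_eq; exact: tcong_sym.
- exact: le3_add.
Qed.

Lemma le3_trans x y z : le3 x y -> le3 y z -> le3 x z.
Proof. rewrite /le3; lia. Qed.


Lemma tadd_assoc (x y z : triple) : tadd x (tadd y z) = tadd (tadd x y) z.
Proof. case: x => [[a b] c]; case: y => [[a' b'] c']; case: z => [[a'' b''] c'']; rewrite /tadd /=; congr (_, _, _); lia. Qed.

Lemma leL_trans p q r A B C : leL p q r A B -> leL p q r B C -> leL p q r A C.
Proof.
move=> [x [y [v [eA eB h1]]]] [y2 [z [v2 [eB' eC h2]]]].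
exists x, z, (tadd v v2); split => //; rewrite tadd_assoc.
apply: tcong_trans (tcong_add v2 h1) _.
apply: tcong_trans _ h2; apply: tcong_add; apply: cls_inv; by rewrite -eB -eB'.
Qed.

Lemma leL_antisym p q r A B : (0 < r)%N -> (0 < p)%N ->
  leL p q r A B -> leL p q r B A -> A = B.
Proof.
move=> hr hp /leL_elim [x [y [eA eB h1]]] /leL_elim [y' [x' [eB' eA' h2]]].
have ey : om p q r y = om p q r y' by apply: om_tcong; apply: cls_inv; rewrite -eB -eB'.
have ex : om p q r x = om p q r x' by apply: om_tcong; apply: cls_inv; rewrite -eA -eA'.
have m1 := om_mono p q r h1; have m2 := om_mono p q r h2.
have e : om p q r x = om p q r y by apply/eqP; rewrite eqn_leq m1 /= ey ex m2.
by rewrite eA eB (om_eq hr hp h1 e).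
Qed.

Lemma leL_refl p q r A : isElt p q r A -> leL p q r A A.
Proof. move=> [x ->]; apply: leL_intro; rewrite /le3; lia. Qed.

Lemma leL_zero p q r A : isElt p q r A -> leL p q r (zeroL p q r) A.
Proof. move=> [x ->]; apply: leL_intro; rewrite /le3 /t0 /=; lia. Qed.

Lemma leL_isElt p q r A B : leL p q r A B -> isElt p q r A /\ isElt p q r B.
Proof. by move=> [x [y [v [-> -> _]]]]; split; [exists x | exists y]. Qed.

Lemma zero_cls p q r x : (0 < r)%N -> (0 < p)%N -> (0 < q)%N ->
  cls p q r x = zeroL p q r -> x = t0.
Proof.
move=> hr hp hq /cls_inv /om_tcong; rewrite /om /t0 /=.
case: x => [[a b] c] /=; rewrite !muln0 => h.
congr (_, _, _); nia.
Qed.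

Definition hgt (p q r : nat) (S : set triple) : nat := om p q r (xget t0 S).

Lemma hgt_cls p q r x : hgt p q r (cls p q r x) = om p q r x.
Proof.
rewrite /hgt; case: xgetP => [y _ hy|hn]; first by apply/esym/om_tcong.
by exfalso; apply: (hn x); exact: cls_self.
Qed.

Lemma ltL_hgt p q r A B : (0 < r)%N -> (0 < p)%N -> ltL p q r A B ->
  (hgt p q r A < hgt p q r B)%N.
Proof.
move=> hr hp [/leL_elim [x [y [-> -> h]]] ne]; rewrite !hgt_cls.
by apply: le3_om => // e; apply: ne; rewrite e.
Qed.

Lemma lee_leL p q r A B : isElt p q r A -> lee (ltL p q r) A B -> leL p q r A B.
Proof. by move=> hA [<-|[]]; [exact: leL_refl | ]. Qed.

Lemma leL_lee p q r A B : leL p q r A B -> lee (ltL p q r) A B.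
Proof. by move=> h; have [e|ne] := pselect (A = B); [left | right]. Qed.

Local Open Scope nat_scope.
Lemma tau_add p s m : (0 < p)%N -> tau p s (m + p) = (tau p s m + s)%N.
Proof.
move=> hp; rewrite /tau.
have -> : (m + p) %/ p = (m %/ p).+1.
  by rewrite divnDr ?dvdnn // divnn hp addn1.
have -> : (m + p) %% p = m %% p by rewrite modnDr.
by rewrite mulSn; lia.
Qed.

Lemma tau0 p s : tau p s 0 = 0%N.
Proof. by rewrite /tau div0n mod0n mul0n min0n. Qed.

Lemma tau_mono p s m n : (0 < p)%N -> (m <= n)%N -> (tau p s m <= tau p s n)%N.
Proof.
move=> hp hmn; rewrite /tau.
have em := divn_eq m p; have en := divn_eq n p.
have hm := ltn_pmod m hp; have hn := ltn_pmod n hp.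
have hk : (m %/ p <= n %/ p)%N by apply: leq_div2r.
move: (m %/ p) (n %/ p) (m %% p) (n %% p) em en hm hn hk => k k' i j em en hm hn hk.
rewrite leq_eqVlt in hk; case/orP: hk => [/eqP ek|lk].
  subst k'; have hij : (i <= j)%N by nia.
  apply: leq_add => //; rewrite geq_min !leq_min; lia.
case: s => [|s]; first by rewrite !muln0 /=; lia.
have : (k.+1 * s.+1 <= k' * s.+1)%N by apply: leq_mul.
rewrite mulSn /=; lia.
Qed.

Lemma tau_back p s m : (0 < s)%N -> (s <= p)%N -> tau p s (tau s p m) = m.
Proof.
move=> hs hsp; rewrite /tau.
have hm := ltn_pmod m hs.
have -> : minn (m %% s) p.-1 = m %% s by apply/minn_idPl; lia.
have hp : (0 < p)%N by lia.
rewrite divnMDl // modnMDl (divn_small (leq_trans hm hsp)) addn0.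
rewrite (modn_small (leq_trans hm hsp)).
have -> : minn (m %% s) s.-1 = m %% s by apply/minn_idPl; lia.
by rewrite -divn_eq.
Qed.

Lemma tau_le p s m : (0 < s)%N -> (s <= p)%N -> (tau s p (tau p s m) <= m)%N.
Proof.
move=> hs hsp; have hp : (0 < p)%N by lia.
rewrite {1}/tau.
have hmin : (minn (m %% p) s.-1 < s)%N by rewrite gtn_min; apply/orP; right; lia.
rewrite /tau divnMDl // modnMDl (divn_small hmin) (modn_small hmin) addn0.
rewrite {3}(divn_eq m p) leq_add2l; rewrite !geq_min; lia.
Qed.

Lemma tau_eq0 p s m : (0 < p)%N -> (0 < s)%N -> ((2 <= s)%N \/ p = 1%N) ->
  tau p s m = 0%N -> m = 0%N.
Proof.
move=> hp hs [h2|->]; rewrite /tau.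
  move/eqP; rewrite addn_eq0 => /andP[hk /eqP hmin].
  move: hk; rewrite muln_eq0 => /orP[/eqP k0|]; last by lia.
  rewrite (divn_eq m p) k0 mul0n add0n; move: hmin; rewrite /minn; case: ifP; lia.
rewrite divn1 modn1 min0n addn0 => /eqP; rewrite muln_eq0 => /orP[/eqP|/eqP] //; lia.
Qed.
Local Open Scope ring_scope.

Definition good (p q r s t u : nat) : Prop :=
  [/\ (0 < s <= p)%N, (0 < t <= q)%N, (0 < u <= r)%N &
      [/\ ((2 <= s)%N \/ p = 1%N), ((2 <= t)%N \/ q = 1%N) & ((2 <= u)%N \/ r = 1%N)]].

Definition pos3 (p q r : nat) := [/\ (0 < p)%N, (0 < q)%N & (0 < r)%N].

Lemma good_pos3 p q r s t u : good p q r s t u -> pos3 p q r /\ pos3 s t u.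
Proof. move=> [/andP[h1 h2] /andP[h3 h4] /andP[h5 h6] _]; split; split; lia. Qed.

Lemma Trep_gstep p q r s t u x y : pos3 p q r ->
  gstep p q r x y -> gstep s t u (Trep p q r s t u x) (Trep p q r s t u y).
Proof.
move=> [hp hq hr] [l [-> ->]]; exists (Trep p q r s t u l).
rewrite /Trep /tadd /= !addn0 !tau_add //.
Qed.

Lemma Trep_tcong p q r s t u x y : pos3 p q r ->
  tcong p q r x y -> tcong s t u (Trep p q r s t u x) (Trep p q r s t u y).
Proof.
move=> g; elim => {x y} [x y h|x|x y _ h|x y z _ h1 _ h2].
- by apply: rst_step; exact: Trep_gstep.
- exact: rst_refl.
- exact: rst_sym.
- exact: rst_trans h2.
Qed.

Lemma Tmap_cls p q r s t u x : pos3 p q r ->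
  Tmap p q r s t u (cls p q r x) = cls s t u (Trep p q r s t u x).
Proof.
move=> g; apply: funext => z; apply: propext; split.
- move=> [x' [hx' hz]]; rewrite /cls /=.
  exact: tcong_trans (Trep_tcong s t u g hx') hz.
- by move=> hz; exists x; split => //; exact: cls_self.
Qed.

Lemma Trep_mono p q r s t u x y : good p q r s t u -> le3 x y ->
  le3 (Trep p q r s t u x) (Trep p q r s t u y).
Proof.
move=> /good_pos3 [[hp hq hr] _] [h1 [h2 h3]]; rewrite /le3 /Trep /=.
by split; [|split]; apply: tau_mono.
Qed.

Lemma Trep_back p q r s t u y : good p q r s t u ->
  Trep p q r s t u (Trep s t u p q r y) = y.
Proof.
move=> [/andP[h1 h2] /andP[h3 h4] /andP[h5 h6] _].
case: y => [[a b] c]; rewrite /Trep /= !tau_back //.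
Qed.

Lemma Trep_le p q r s t u x : good p q r s t u ->
  le3 (Trep s t u p q r (Trep p q r s t u x)) x.
Proof.
move=> [/andP[h1 h2] /andP[h3 h4] /andP[h5 h6] _].
by rewrite /le3 /Trep /=; split; [|split]; apply: tau_le.
Qed.

Lemma Trep_t0 p q r s t u : Trep p q r s t u t0 = t0.
Proof. by rewrite /Trep /t0 /= !tau0. Qed.

Lemma Trep_eq0 p q r s t u x : good p q r s t u -> Trep p q r s t u x = t0 -> x = t0.
Proof.
move=> g; have [[hp hq hr] [hs ht hu]] := good_pos3 g; case: g => _ _ _ [g1 g2 g3].
case: x => [[a b] c]; rewrite /Trep /t0 /= => [[e1 e2 e3]].
by rewrite (tau_eq0 hp hs g1 e1) (tau_eq0 hq ht g2 e2) (tau_eq0 hr hu g3 e3).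
Qed.

Lemma T_isElt p q r s t u S : pos3 p q r -> isElt p q r S ->
  isElt s t u (Tmap p q r s t u S).
Proof. by move=> g [x ->]; rewrite Tmap_cls //; exists (Trep p q r s t u x). Qed.

Lemma T_mono p q r s t u S S' : good p q r s t u -> leL p q r S S' ->
  leL s t u (Tmap p q r s t u S) (Tmap p q r s t u S').
Proof.
move=> g /leL_elim [x [y [-> -> h]]]; have [g1 _] := good_pos3 g; rewrite !Tmap_cls //.
by apply: leL_intro; exact: Trep_mono.
Qed.

Lemma T'_mono p q r s t u S S' : good p q r s t u -> leL s t u S S' ->
  leL p q r (Tmap s t u p q r S) (Tmap s t u p q r S').
Proof.
move=> g /leL_elim [x [y [-> -> h]]]; have [_ g2] := good_pos3 g; rewrite !Tmap_cls //.
apply: leL_intro; move: h; rewrite /le3 /Trep /=.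
case: g => /andP[? ?] /andP[? ?] /andP[? ?] _ [h1 [h2 h3]].
by split; [|split]; apply: tau_mono.
Qed.

Lemma T_back p q r s t u S : good p q r s t u -> isElt s t u S ->
  Tmap p q r s t u (Tmap s t u p q r S) = S.
Proof.
move=> g [y ->]; have [g1 g2] := good_pos3 g.
by rewrite Tmap_cls // Tmap_cls // Trep_back.
Qed.

Lemma T_le p q r s t u S : good p q r s t u -> isElt p q r S ->
  leL p q r (Tmap s t u p q r (Tmap p q r s t u S)) S.
Proof.
move=> g [x ->]; have [g1 g2] := good_pos3 g.
rewrite Tmap_cls // Tmap_cls //; apply: leL_intro; exact: Trep_le.
Qed.

Lemma T_zero p q r s t u : pos3 p q r ->
  Tmap p q r s t u (zeroL p q r) = zeroL s t u.
Proof. by move=> g; rewrite /zeroL Tmap_cls // Trep_t0. Qed.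

Lemma T_nz p q r s t u S : good p q r s t u -> isElt p q r S ->
  Tmap p q r s t u S = zeroL s t u -> S = zeroL p q r.
Proof.
move=> g [x ->]; have [[hp hq hr] [hs ht hu]] := good_pos3 g.
rewrite Tmap_cls // => /zero_cls => h.
by rewrite (Trep_eq0 g (h hu hs ht)).
Qed.

Definition box (M : nat) : seq triple :=
  [seq (ij, k) | ij <- [seq (i, j) | i <- iota 0 M.+1, j <- iota 0 M.+1], k <- iota 0 M.+1].

Lemma in_box M (x : triple) : (x.1.1 <= M)%N -> (x.1.2 <= M)%N -> (x.2 <= M)%N ->
  x \in box M.
Proof.
case: x => [[a b] c] /= ha hb hc; rewrite /box.
apply: (@allpairs_f _ _ _ (fun ij k => (ij, k))); last by rewrite mem_iota; lia.
apply: (@allpairs_f _ _ _ (fun i j => (i, j))); rewrite mem_iota; lia.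
Qed.

Lemma interval_finite p q r lam : pos3 p q r -> isElt p q r lam ->
  finite_set (intervalL p q r lam).
Proof.
move=> [hp hq hr] [y0 ->].
pose M := om p q r y0.
apply: (@sub_finite_set _ _ ((cls p q r) @` [set` box M])); last first.
  by apply: finite_image; exact: finite_seq.
move=> S [_ _ [/leL_elim [x [y [eS ey hxy]]] _]].
exists x => //; rewrite /=.
have hy : om p q r y = M by rewrite /M; apply/esym/om_tcong; apply: cls_inv.
have := om_mono p q r hxy; rewrite hy /M /om; case: x {eS hxy} => [[a b] c] /= h.
apply: in_box => /=; nia.
Qed.

Lemma cmp_of_mono p q r s t u (f : set triple -> set triple) S S' :
  (leL p q r S S' -> leL s t u (f S) (f S')) ->
  (leL p q r S' S -> leL s t u (f S') (f S)) ->
  cmp (ltL p q r) S S' -> cmp (ltL s t u) (f S) (f S').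
Proof.
move=> h1 h2 [->|[l _]|[l _]]; first exact: cmp_refl.
- exact: lee_cmp (leL_lee (h1 l)).
- exact: cmp_sym (lee_cmp (leL_lee (h2 l))).
Qed.

Lemma lee_trans_isElt p q r A B C : (0 < r)%N -> (0 < p)%N ->
  isElt p q r A -> isElt p q r B ->
  lee (ltL p q r) A B -> lee (ltL p q r) B C -> lee (ltL p q r) A C.
Proof.
move=> hr hp hA hB h1 h2; apply: leL_lee.
exact: leL_trans (lee_leL hA h1) (lee_leL hB h2).
Qed.

Theorem main_gen p q r s t u lam : good p q r s t u -> posL p q r lam ->
  (Tmap s t u p q r (Tmap p q r s t u lam) = lam ->
     htpy_equiv (Frob p q r lam) (Frob s t u (Tmap p q r s t u lam))) /\
  (Tmap s t u p q r (Tmap p q r s t u lam) <> lam -> htpy_equiv (Frob p q r lam) pt).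
Proof.
move=> g [lamE lam0].
have [[hp hq hr] [hs ht hu]] := good_pos3 g.
have g1 : pos3 p q r by [].
have g2 : pos3 s t u by [].
set T := Tmap p q r s t u; set T' := Tmap s t u p q r.
set P := intervalL p q r lam.
have finP : finite_set P by exact: interval_finite.
set sP : seq (set triple) := finmap.enum_fset (fset_set P).
have usP : uniq sP by exact: finmap.fset_uniq.
have sPP : forall x, x \in sP -> P x by move=> x; rewrite in_fset_set // inE.
have PsP : forall x, P x -> x \in sP by move=> x Px; rewrite in_fset_set // inE.
have hN : forall S, P S -> (hgt p q r S < hgt p q r lam)%N.
  by move=> S [_ _ l]; exact: ltL_hgt.
have hh : forall S S', P S -> P S' -> ltL p q r S S' -> (hgt p q r S < hgt p q r S')%N.
  by move=> S S' _ _ l; exact: ltL_hgt.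
have htr : forall x y z, P x -> P y -> P z -> lee (ltL p q r) x y ->
    lee (ltL p q r) y z -> lee (ltL p q r) x z.
  by move=> x y z [hx _ _] [hy _ _] _; exact: lee_trans_isElt.
have antis := @leL_antisym p q r.
have Tz := T_zero s t u g1.
have T'z := T_zero p q r g2.
split.
- move=> fix_lam.
  set lam' := T lam.
  have lam'E : isElt s t u lam' by exact: T_isElt.
  set P' := intervalL s t u lam'.
  have finP' : finite_set P' by exact: interval_finite.
  set sP' : seq (set triple) := finmap.enum_fset (fset_set P').
  have usP' : uniq sP' by exact: finmap.fset_uniq.
  have sPP' : forall x, x \in sP' -> P' x by move=> x; rewrite in_fset_set // inE.
  have PsP' : forall x, P' x -> x \in sP' by move=> x Px; rewrite in_fset_set // inE.
  apply: (@abs_equiv _ _ (ltL p q r) (ltL s t u) P P' sP sP' T T' lam (hgt p q r) (hgt p q r lam)) => //.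
  + move=> S [SE [_ S0] [Sl Sln]]; split; first exact: T_isElt.
    * split; first by apply: leL_zero; exact: T_isElt.
      by move=> e; apply: S0; rewrite (T_nz g SE (esym e)).
    * split; first exact: T_mono.
      move=> e; apply: Sln; apply: antis => //.
      have e2 : T' (T S) = lam by rewrite e; exact: fix_lam.
      by rewrite -{1}e2; exact: T_le.
  + move=> S [SE [_ S0] [Sl Sln]]; split; first exact: T_isElt.
    * split; first by apply: leL_zero; exact: T_isElt.
      move=> e; apply: S0; rewrite -(T_back g SE) -/T' -e; exact/esym/Tz.
    * split; first by rewrite -fix_lam; exact: T'_mono.
      by move=> e; apply: Sln; rewrite -(T_back g SE) -/T' e.
  + move=> x x' _ _; apply: cmp_of_mono; exact: T_mono.
  + move=> x x' _ _; apply: cmp_of_mono; exact: T'_mono.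
  + by move=> y [yE _ _]; exact: T_back.
  + by move=> x [xE _ _]; apply: leL_lee; exact: T_le.
- move=> nfix.
  set c := T' (T lam).
  have eE : forall S, isElt p q r S -> isElt p q r (T' (T S)).
    by move=> S SE; apply: T_isElt => //; exact: T_isElt.
  have e0 : forall S, isElt p q r S -> T' (T S) = zeroL p q r -> S = zeroL p q r.
    move=> S SE e; apply: (T_nz g SE).
    by rewrite -(T_back g (T_isElt s t u g1 SE)) -/T' e Tz.
  apply: (@abs_contract _ (ltL p q r) P sP (fun S => T' (T S)) c (hgt p q r) (hgt p q r lam)) => //.
  + split; first exact: eE.
    * split; first by apply: leL_zero; exact: eE.
      by move=> e; apply: lam0; apply: e0 => //; rewrite -e.
    * by split => //; exact: T_le.
  + move=> S [SE [_ S0] [Sl Sln]]; split; first exact: eE.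
    * split; first by apply: leL_zero; exact: eE.
      by move=> e; apply: S0; apply/esym; apply: e0 => //; rewrite -e.
    * split; first exact: leL_trans (T_le g SE) Sl.
      move=> e; apply: Sln; apply: antis => //.
      by rewrite -{1}e; exact: T_le.
  + by move=> S [SE _ _]; apply: leL_lee; exact: T_le.
  + by move=> S [SE _ [Sl _]]; apply: leL_lee; apply: T'_mono => //; exact: T_mono.
  + move=> x x' _ _; apply: (@cmp_of_mono p q r p q r (fun S => T' (T S))) => l;
    apply: T'_mono => //; exact: T_mono.
Qed.

End Helpers.

Theorem theorem3p4 (p q r : nat) (lam : set triple) :
  (0 < p)%N -> (0 < q)%N -> (0 < r)%N -> (p <= q)%N -> (2 <= r)%N ->
  posL p q r lam ->
  [/\ (p = 1%N -> q = 1%N ->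
         (Tmap 1 1 2 1 1 r (Tmap 1 1 r 1 1 2 lam) = lam ->
            htpy_equiv (Frob 1 1 r lam) (Frob 1 1 2 (Tmap 1 1 r 1 1 2 lam))) /\
         (Tmap 1 1 2 1 1 r (Tmap 1 1 r 1 1 2 lam) <> lam ->
            htpy_equiv (Frob 1 1 r lam) pt)),
      (p = 1%N -> (2 <= q)%N ->
         (Tmap 1 2 2 1 q r (Tmap 1 q r 1 2 2 lam) = lam ->
            htpy_equiv (Frob 1 q r lam) (Frob 1 2 2 (Tmap 1 q r 1 2 2 lam))) /\
         (Tmap 1 2 2 1 q r (Tmap 1 q r 1 2 2 lam) <> lam ->
            htpy_equiv (Frob 1 q r lam) pt)) &
      ((2 <= p)%N ->
         (Tmap 2 2 2 p q r (Tmap p q r 2 2 2 lam) = lam ->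
            htpy_equiv (Frob p q r lam) (Frob 2 2 2 (Tmap p q r 2 2 2 lam))) /\
         (Tmap 2 2 2 p q r (Tmap p q r 2 2 2 lam) <> lam ->
            htpy_equiv (Frob p q r lam) pt))].
Proof.
move=> hp hq hr hpq hr2 hl; split.
- move=> ep eq; subst p q; apply: main_gen => //.
  split; rewrite ?hr2 //; split; by [right | right | left].
- move=> ep hq2; subst p; apply: main_gen => //.
  split; rewrite ?hr2 ?hq2 //; split; by [right | left | left].
- move=> hp2; apply: main_gen => //.
  have hq2 : (2 <= q)%N by apply: leq_trans hp2 hpq.
  split; rewrite ?hr2 ?hq2 ?hp2 //; split; by left.
Qed.
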